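(* Let $(\mathfrak g,J)$ be a real Lie algebra with integrable complex structure and let $\rho:\mathfrak g\to\operatorname{End}E$ be an integrable representation on a real vector space $E$ with complex structure $I$. Then the bilinear map \[\delta:\mathfrak g^{0,1}\times E^{1,0}\to E^{1,0},\qquad(\bar X,V)\mapsto(\rho(\bar X)V)^{1,0},\] where $(\cdot)^{1,0}$ denotes the projection $E_{\mathbb C}\to E^{1,0}$ along $E^{0,1}$, is a $\mathbb C$-linear representation of the complex Lie algebra $\mathfrak g^{0,1}$ on $E^{1,0}$.
   Context: A complex structure on a real Lie algebra $\mathfrak g$ is $J$ with $J^2=-\mathrm{id}$ satisfying $[x,y]-[Jx,Jy]+J[Jx,y]+J[x,Jy]=0$. $\mathfrak g_{\mathbb C}=\mathfrak g^{1,0}\oplus\mathfrak g^{0,1}$ and $E_{\mathbb C}=E^{1,0}\oplus E^{0,1}$ are the $\pm i$-eigenspace decompositions of $J$ and $I$; $\rho$ is extended $\mathbb C$-linearly. The representation $\rho$ is called integrable if $[I,\rho(Jx)]+I[\rho(x),I]=0$ for all $x\in\mathfrak g$. *)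

(* Defs.v *)
(* real vector spaces are lmodType R for R : realType;
   complexifications V_C are modelled as V * V  (pair (u,v) = u + i v),
   complex scalars are elements of R[i] (mathcomp-real-closed complex). *)
From HB Require Import structures.
From mathcomp Require Import all_boot all_order all_algebra.
From mathcomp Require Import reals.
From mathcomp Require Import complex.
Set Implicit Arguments. Unset Strict Implicit. Unset Printing Implicit Defensive.
Import Order.TTheory GRing.Theory Num.Theory.
Local Open Scope ring_scope.

Section RealDefs.
Variable R : realType.

Definition is_real_lie (g : lmodType R) (br : g -> g -> g) : Prop :=
  [/\ (forall (a : R) x y z, br (a *: x + y) z = a *: br x z + br y z),
      (forall (a : R) x y z, br x (a *: y + z) = a *: br x y + br x z),
      (forall x, br x x = 0) &
      (forall x y z, br x (br y z) + br y (br z x) + br z (br x y) = 0)].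

Definition is_lin_cs (V : lmodType R) (f : V -> V) : Prop :=
  (forall (a : R) x y, f (a *: x + y) = a *: f x + f y) /\
  (forall x, f (f x) = - x).

(* complex structure on a Lie algebra: J^2 = -id and Nijenhuis tensor vanishes *)
Definition is_lie_cs (g : lmodType R) (br : g -> g -> g) (J : g -> g) : Prop :=
  is_lin_cs J /\
  (forall x y, br x y - br (J x) (J y) + J (br (J x) y) + J (br x (J y)) = 0).

Definition is_rep (g E : lmodType R) (br : g -> g -> g) (rho : g -> E -> E) : Prop :=
  [/\ (forall (a : R) x y v, rho (a *: x + y) v = a *: rho x v + rho y v),
      (forall (a : R) x v w, rho x (a *: v + w) = a *: rho x v + rho x w) &
      (forall x y v, rho (br x y) v = rho x (rho y v) - rho y (rho x v))].

Definition integrable_rep (g E : lmodType R) (J : g -> g) (I : E -> E)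
    (rho : g -> E -> E) : Prop :=
  forall x v,
    (I (rho (J x) v) - rho (J x) (I v)) + I (rho x (I v) - I (rho x v)) = 0.

Definition cplx (V : lmodType R) := (V * V)%type.

Definition cadd (V : lmodType R) (w1 w2 : cplx V) : cplx V :=
  (w1.1 + w2.1, w1.2 + w2.2).
Definition csub (V : lmodType R) (w1 w2 : cplx V) : cplx V :=
  (w1.1 - w2.1, w1.2 - w2.2).
(* complex scalar multiplication (a + i b)(u + i v) *)
Definition cscale (V : lmodType R) (z : R[i]) (w : cplx V) : cplx V :=
  (complex.Re z *: w.1 - complex.Im z *: w.2,
   complex.Re z *: w.2 + complex.Im z *: w.1).
Definition imul (V : lmodType R) (w : cplx V) : cplx V := (- w.2, w.1).
Definition cext (V : lmodType R) (f : V -> V) (w : cplx V) : cplx V :=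
  (f w.1, f w.2).
Definition cbr (g : lmodType R) (br : g -> g -> g) (X Y : cplx g) : cplx g :=
  (br X.1 Y.1 - br X.2 Y.2, br X.1 Y.2 + br X.2 Y.1).
Definition crho (g E : lmodType R) (rho : g -> E -> E) (X : cplx g) (w : cplx E)
  : cplx E :=
  (rho X.1 w.1 - rho X.2 w.2, rho X.1 w.2 + rho X.2 w.1).

Definition sp10 (V : lmodType R) (f : V -> V) (w : cplx V) : Prop :=
  cext f w = imul w.
Definition sp01 (V : lmodType R) (f : V -> V) (w : cplx V) : Prop :=
  cext f w = - imul w.

Definition proj10 (V : lmodType R) (f : V -> V) (w : cplx V) : cplx V :=
  let p := csub w (imul (cext f w)) in (2^-1 *: p.1, 2^-1 *: p.2).

Definition delta (g E : lmodType R) (rho : g -> E -> E) (I : E -> E)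
    (X : cplx g) (v : cplx E) : cplx E :=
  proj10 I (crho rho X v).

End RealDefs.

(* Main.v *)
Require Import Defs.
From HB Require Import structures.
From mathcomp Require Import all_boot all_order all_algebra.
From mathcomp Require Import reals complex ssrAC lra.
Import GRing.Theory.
Local Open Scope ring_scope.
Set Implicit Arguments. Unset Strict Implicit.

Section Lin.
Variables (R : realType) (V W : lmodType R) (f : V -> W).
Hypothesis hf : forall (a : R) x y, f (a *: x + y) = a *: f x + f y.
Lemma lf0 : f 0 = 0.
Proof. have := hf 1 0 0; rewrite !scale1r addr0 => H.
by apply: (addrI (f 0)); rewrite addr0 [RHS]H. Qed.
Lemma lfD x y : f (x + y) = f x + f y.
Proof. by have := hf 1 x y; rewrite !scale1r. Qed.
Lemma lfZ a x : f (a *: x) = a *: f x.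
Proof. by rewrite -[a *: x]addr0 hf lf0 addr0. Qed.
Lemma lfN x : f (- x) = - f x.
Proof. by rewrite -scaleN1r lfZ scaleN1r. Qed.
Lemma lfB x y : f (x - y) = f x - f y.
Proof. by rewrite lfD lfN. Qed.
End Lin.

Section Main.
Variables (R : realType) (g E : lmodType R) (br : g -> g -> g)
    (J : g -> g) (rho : g -> E -> E) (I : E -> E).
Hypothesis Il : forall (a : R) x y, I (a *: x + y) = a *: I x + I y.
Hypothesis II : forall x, I (I x) = - x.

Lemma Pdef w : proj10 I w = (2^-1 *: (w.1 + I w.2), 2^-1 *: (w.2 - I w.1)).
Proof. by rewrite /proj10 /= opprK. Qed.

Lemma P10 w : sp10 I (proj10 I w).
Proof.
rewrite Pdef /sp10 /cext /imul /=.
rewrite !(lfZ Il) !(lfD Il) !(lfN Il) !II.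
congr pair; last by rewrite opprK addrC.
by rewrite -scalerN opprB addrC.
Qed.

Hypothesis Jl : forall (a : R) x y, J (a *: x + y) = a *: J x + J y.
Hypothesis JJ : forall x, J (J x) = - x.
Hypothesis Nij : forall x y, br x y - br (J x) (J y) + J (br (J x) y) + J (br x (J y)) = 0.

Lemma sp01E X : sp01 J X -> X = (X.1, J X.1).
Proof. case: X => x1 x2; rewrite /sp01 /cext /imul /= => [[-> _]]. by rewrite opprK. Qed.
Lemma sp10E v : sp10 I v -> v = (v.1, - I v.1).
Proof. case: v => x1 x2; rewrite /sp10 /cext /imul /= => [[-> _]]. by rewrite opprK. Qed.

Lemma part1 X Y : sp01 J X -> sp01 J Y -> sp01 J (cbr br X Y).
Proof.
move=> /sp01E -> /sp01E ->; set x := X.1; set y := Y.1.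
have A : br x y - br (J x) (J y) = - J (br x (J y) + br (J x) y).
  apply/eqP; rewrite -addr_eq0 (lfD Jl) addrC [J (br x _) + _]addrC addrA.
  by rewrite (ACl (3*4*1*2)%AC) /= Nij.
rewrite /sp01 /cext /imul /= A (lfN Jl) JJ opprK; congr pair.
all: by rewrite /= opprK.
Qed.

Hypothesis r1 : forall (a : R) x y v, rho (a *: x + y) v = a *: rho x v + rho y v.
Hypothesis r2 : forall (a : R) x v w, rho x (a *: v + w) = a *: rho x v + rho x w.
Hypothesis r3 : forall x y v, rho (br x y) v = rho x (rho y v) - rho y (rho x v).

Let r1' v : forall (a : R) x y, (fun x => rho x v) (a *: x + y) = a *: (fun x => rho x v) x + (fun x => rho x v) y := fun a x y => r1 a x y v.
Lemma rDl x y v : rho (x + y) v = rho x v + rho y v. Proof. exact: (lfD (r1' v)). Qed.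
Lemma rNl x v : rho (- x) v = - rho x v. Proof. exact: (lfN (r1' v)). Qed.
Lemma rZl a x v : rho (a *: x) v = a *: rho x v. Proof. exact: (lfZ (r1' v)). Qed.
Lemma rBl x y v : rho (x - y) v = rho x v - rho y v. Proof. exact: (lfB (r1' v)). Qed.
Lemma rDr x v w : rho x (v + w) = rho x v + rho x w. Proof. exact: (lfD (fun a => r2 a x)). Qed.
Lemma rNr x v : rho x (- v) = - rho x v. Proof. exact: (lfN (fun a => r2 a x)). Qed.
Lemma rZr a x v : rho x (a *: v) = a *: rho x v. Proof. exact: (lfZ (fun a => r2 a x)). Qed.
Lemma rBr x v w : rho x (v - w) = rho x v - rho x w. Proof. exact: (lfB (fun a => r2 a x)). Qed.

Lemma Padd a b : proj10 I (cadd a b) = cadd (proj10 I a) (proj10 I b).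
Proof.
rewrite !Pdef /cadd /= !(lfD Il); congr pair; rewrite -scalerDr; congr (_ *: _).
  by rewrite !addrA (ACl (1*3*2*4)%AC).
by rewrite opprD !addrA (ACl (1*3*2*4)%AC).
Qed.

Ltac expand := rewrite /cscale /cadd /csub /crho /=; rewrite ?Pdef /=;
  rewrite ?(rDl, rNl, rZl, rBl, rDr, rNr, rZr, rBr, (lfD Il), (lfN Il), (lfZ Il), (lfB Il), II);
  rewrite ?(scalerDr, scalerBr, scalerN, opprD, opprK, scalerA, addrA);
  rewrite ?(mulrC _ 2^-1).

Ltac acs p := congr pair; rewrite [LHS](ACl p) /=.
Lemma Pscale z w : proj10 I (cscale z w) = cscale z (proj10 I w).
Proof. by expand; acs (1*3*2*4)%AC. Qed.
Lemma rscl z X v : crho rho (cscale z X) v = cscale z (crho rho X v).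
Proof. by expand; acs (1*3*4*2)%AC. Qed.
Lemma rscr z X v : crho rho X (cscale z v) = cscale z (crho rho X v).
Proof. by expand; acs (1*3*2*4)%AC. Qed.
Lemma radl X Y v : crho rho (cadd X Y) v = cadd (crho rho X v) (crho rho Y v).
Proof. by expand; acs (1*3*2*4)%AC. Qed.
Lemma radr X v w : crho rho X (cadd v w) = cadd (crho rho X v) (crho rho X w).
Proof. by expand; acs (1*3*2*4)%AC. Qed.
Lemma Psub a b : proj10 I (csub a b) = csub (proj10 I a) (proj10 I b).
Proof. by expand; acs (1*3*2*4)%AC. Qed.
Lemma L1 X Y v : crho rho (cbr br X Y) v = csub (crho rho X (crho rho Y v)) (crho rho Y (crho rho X v)).
Proof. by rewrite /cbr; expand; rewrite ?r3; expand; acs (1*5*7*3*2*8*6*4)%AC. Qed.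

Lemma half (x : E) : 2^-1 *: x + 2^-1 *: x = x.
Proof. by rewrite -scalerDl (_ : 2^-1 + 2^-1 = 1 :> R) ?scale1r //; lra. Qed.

Lemma Dec w : w = cadd (proj10 I w) (2^-1 *: (w.1 - I w.2), I (2^-1 *: (w.1 - I w.2))).
Proof. case: w => w1 w2. expand. congr pair.
  by rewrite [RHS](ACl (1*3*2*4)%AC) /= addrK half.
by rewrite subrK half.
Qed.
Lemma PE01 b : proj10 I (b, I b) = (0, 0).
Proof. by rewrite Pdef /= II subrr scaler0 addrN scaler0. Qed.

Hypothesis integ : integrable_rep J I rho.
Lemma Zero X a : sp01 J X -> proj10 I (crho rho X (a, I a)) = (0, 0).
Proof. move=> /sp01E ->; set x := X.1.
have H := integ x a. have H' := congr1 I H. rewrite (lf0 Il) in H'.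
rewrite /crho /=.
have E1 : rho x (I a) + rho (J x) a = I (rho x a - rho (J x) (I a)).
  move: H'; rewrite ?((lfD Il), (lfN Il), (lfB Il), II, opprK, opprD, addrA).
  move=> H0; apply/eqP; rewrite eq_sym -subr_eq0 opprD !addrA.
  by rewrite (ACl (4*2*3*1)%AC) /= H0.
by rewrite E1 PE01.
Qed.

Lemma Kb X w : sp01 J X -> proj10 I (crho rho X (proj10 I w)) = proj10 I (crho rho X w).
Proof.
move=> hX; rewrite [in RHS](Dec w) radr Padd Zero //.
by case: (proj10 I _) => p q; rewrite /cadd /= !addr0.
Qed.

End Main.

Theorem mainTheorem3 (R : realType) (g E : lmodType R) (br : g -> g -> g)
    (J : g -> g) (rho : g -> E -> E) (I : E -> E) :
  is_real_lie br -> is_lie_cs br J -> is_rep br rho -> is_lin_cs I ->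
  integrable_rep J I rho ->
  (* g^{0,1} is a complex Lie subalgebra of g_C *)
  (forall X Y, sp01 J X -> sp01 J Y -> sp01 J (cbr br X Y)) /\
  (* delta maps g^{0,1} x E^{1,0} into E^{1,0} *)
  (forall X v, sp01 J X -> sp10 I v -> sp10 I (delta rho I X v)) /\
  (* delta is C-bilinear *)
  (forall X Y v, sp01 J X -> sp01 J Y -> sp10 I v ->
     delta rho I (cadd X Y) v = cadd (delta rho I X v) (delta rho I Y v)) /\
  (forall (z : R[i]) X v, sp01 J X -> sp10 I v ->
     delta rho I (cscale z X) v = cscale z (delta rho I X v)) /\
  (forall X v w, sp01 J X -> sp10 I v -> sp10 I w ->
     delta rho I X (cadd v w) = cadd (delta rho I X v) (delta rho I X w)) /\
  (forall (z : R[i]) X v, sp01 J X -> sp10 I v ->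
     delta rho I X (cscale z v) = cscale z (delta rho I X v)) /\
  (* delta is a Lie algebra representation *)
  (forall X Y v, sp01 J X -> sp01 J Y -> sp10 I v ->
     delta rho I (cbr br X Y) v =
     csub (delta rho I X (delta rho I Y v)) (delta rho I Y (delta rho I X v))).
Proof.
move=> _ [[Jl JJ] Nij] [r1 r2 r3] [Il II] integ.
split; first by move=> X Y; apply: (part1 Jl JJ Nij).
split; first by move=> X v _ _; apply: (P10 Il II).
split; first by move=> X Y v _ _ _; rewrite /delta (radl r1) (Padd Il).
split; first by move=> z X v _ _; rewrite /delta (rscl r1) (Pscale Il).
split; first by move=> X v w _ _ _; rewrite /delta (radr r2) (Padd Il).
split; first by move=> z X v _ _; rewrite /delta (rscr r2) (Pscale Il).
move=> X Y v hX hY _; rewrite /delta (L1 r1 r2 r3) (Psub Il).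
by rewrite (Kb Il II r2 integ _ hX) (Kb Il II r2 integ _ hY).
Qed.
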